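(* Let $p$ be a prime, and let $\alpha=(\ell_1,\dots,\ell_m)$ and $\tau=(k_1,\dots,k_n)$ be types with $\alpha\le\tau$. For $1\le j\le n$ let $f^\tau_\alpha(j)=\max\{i\in\{0,1,\dots,m\}\colon i=0\text{ or }\ell_i\ge k_j\}$, and let $u^\tau_\alpha=\max\{j-f^\tau_\alpha(j)\colon 1\le j\le n\}$. Then $$\min\{\mathrm{rk}(A(\tau)/N)\colon N\le A(\tau),\ \gamma(N)=\alpha\}=u^\tau_\alpha.$$
   Context: A type is a tuple of integers $(k_1,\dots,k_n)$ with $k_1\ge\cdots\ge k_n\ge1$; $A(\tau)=\prod_{i=1}^n\mathbb{Z}/p^{k_i}\mathbb{Z}$. For a finite abelian $p$-group $G$, $\gamma(G)$ is its type (the unique type $\tau$ with $G\cong A(\tau)$), and $\mathrm{rk}(G)$ is the minimal number of generators of $G$. For tuples $\eta=(\ell_1,\dots,\ell_m)$, $\tau=(k_1,\dots,k_n)$, $\eta\le\tau$ means $m\le n$ and $\ell_i\le k_i$ for all $i\le m$. *)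

(* Defs.v *)
From mathcomp Require Import all_boot all_order all_fingroup all_solvable.
Set Implicit Arguments. Unset Strict Implicit. Unset Printing Implicit Defensive.

Definition is_type (t : seq nat) : bool := sorted geq t && all (fun k => 0 < k) t.

Definition type_le (eta tau : seq nat) : bool :=
  (size eta <= size tau) &&
  [forall i : 'I_(size eta), nth 0 eta i <= nth 0 tau i].

(* A finite abelian p-group G has type tau (gamma(G) = tau), i.e. G is
   isomorphic to A(tau) = prod_i Z/p^{k_i}: stated via the library's
   abelian_type (orders of the cyclic factors in decreasing order). *)
Definition has_type (p : nat) (gT : finGroupType) (G : {set gT}) (tau : seq nat) :=
  abelian G /\ abelian_type G = [seq p ^ k | k <- tau].

Definition rk (gT : finGroupType) (G : {set gT}) : nat :=
  \big[minn/#|G|]_(X : {set gT} | (<<X>> == G)%g) #|X|.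

Definition ffun_ta (alpha tau : seq nat) (j : nat) : nat :=
  \max_(i < (size alpha).+1 | (val i == 0%N) || (nth 0 tau j.-1 <= nth 0 alpha i.-1)) i.

(* u^tau_alpha = max { j - f(j) : 1 <= j <= n } (the true maximum is >= n - m >= 0,
   so truncated subtraction does not change its value). *)
Definition u_ta (alpha tau : seq nat) : nat :=
  \max_(1 <= j < (size tau).+1) (j - ffun_ta alpha tau j).

(* Main.v *)
Require Import Defs.
From mathcomp Require Import all_boot all_order all_fingroup all_solvable.
From mathcomp Require Import zify.
Set Implicit Arguments. Unset Strict Implicit. Unset Printing Implicit Defensive.
Import GroupScope.

Lemma bigmin_le_seq (I : eqType) (r : seq I) (P : pred I) (F : I -> nat) x i0 :
  i0 \in r -> P i0 -> \big[minn/x]_(i <- r | P i) F i <= F i0.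
Proof.
elim: r => // h t IH; rewrite inE big_cons => /predU1P[<- Pi|it Pi].
  by rewrite Pi geq_minl.
case: ifP => _; last exact: IH.
by rewrite (leq_trans (geq_minr _ _)) ?IH.
Qed.

Lemma rk_grank (gT : finGroupType) (H : {group gT}) : rk H = 'm(H).
Proof.
rewrite /rk; apply/eqP; rewrite eqn_leq; apply/andP; split.
  have [B genB <-] := grank_witness H.
  by rewrite (bigmin_le_seq _ _ (mem_index_enum B)) // genB eqxx.
elim/big_ind: _ => [|a b Ha Hb|X /eqP genX]; first by have := grank_min H; rewrite genGid.
  by rewrite leq_min Ha Hb.
by rewrite -genX grank_min.
Qed.

Lemma mem_bigdprod_seq (gT : finGroupType) (s : seq gT) (E : {group gT}) :
  \big[dprod/1]_(x <- s) <[x]> = E -> {subset s <= E}.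
Proof.
elim: s E => [|x s IH] E; first by [].
rewrite big_cons => defE y; rewrite inE => /predU1P[->|ys].
  case/dprodP: defE => [[_ E' _ defE']]; rewrite defE' => mulE _ _.
  by rewrite -mulE -[x in x \in _]mulg1 mem_mulg ?cycle_id ?group1.
case/dprodP: (defE) => [[_ E' _ defE']]; rewrite defE' => mulE _ _.
by rewrite -mulE -(mul1g y) mem_mulg ?group1 // (IH _ defE').
Qed.

Lemma gen_bigdprod_seq (gT : finGroupType) (s : seq gT) (E : {group gT}) :
  \big[dprod/1]_(x <- s) <[x]> = E -> <<[set x in s]>> = E.
Proof.
move=> defE; rewrite -(bigdprodWY defE).
elim: s {E defE} => [|x b IHb]; first by rewrite big_nil gen0.
by rewrite big_cons -joingE -joing_idr -IHb joing_idl joing_idr set_cons.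
Qed.

Lemma dir_lemma (gT : finGroupType) (es ys : seq gT) (E : {group gT}) (a : nat -> nat) (z : nat -> gT) :
  abelian E -> \big[dprod/1]_(x <- es) <[x]> = E -> size ys <= size es ->
  (forall i, i < size ys -> nth 1 ys i = nth 1 es i ^+ a i * z i) ->
  (forall i, i < size ys -> z i \in <<[set x in drop i.+1 es]>>) ->
  (forall i, i < size ys -> #[z i] %| #[nth 1 es i ^+ a i]) ->
  exists2 H : {group gT}, \big[dprod/1]_(y <- ys) <[y]> = H &
    [/\ H \subset E, forall i, i < size ys -> #[nth 1 ys i] = #[nth 1 es i ^+ a i]
      & {subset ys <= H}].
Proof.
elim: es ys E a z => [|x es IH] [|y ys] E a z cE defE //= lesz hy hz hord.
- by exists 1%G; rewrite ?big_nil //; split; rewrite ?sub1G.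
- by exists 1%G; rewrite ?big_nil //; split; rewrite ?sub1G.
rewrite big_cons in defE.
case/dprodP: (defE) => [[_ E' _ defE']]; rewrite defE' => mulE cE' tiE.
have sE'E : E' \subset E by rewrite -mulE mulG_subr.
have xE : x \in E by rewrite -mulE -[x in x \in _]mulg1 mem_mulg ?cycle_id ?group1.
have [H' defH' [sH'E' ordH' memH']] := IH ys E' (fun i => a i.+1) (fun i => z i.+1)
   (abelianS sE'E cE) defE' lesz (fun i lt => hy i.+1 lt) (fun i lt => hz i.+1 lt)
   (fun i lt => hord i.+1 lt).
have y0 := hy 0 erefl; rewrite /= in y0.
have z0 : z 0 \in E'.
  by have := hz 0 erefl; rewrite /= drop0 (gen_bigdprod_seq defE').
set w := x ^+ a 0 in y0.
have wE : w \in E by rewrite groupX.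
have z0E : z 0 \in E by apply: (subsetP sE'E).
have cwz : commute w (z 0) by apply: (centsP cE).
have yt t : y ^+ t = w ^+ t * z 0 ^+ t by rewrite y0 expgMn.
have K t : y ^+ t \in E' -> w ^+ t = 1.
  move=> yE'; have wE' : w ^+ t \in E'.
    by rewrite -(mulgK (z 0 ^+ t) (w ^+ t)) -yt groupM // groupV groupX.
  have : w ^+ t \in <[x]> :&: E' by rewrite inE wE' andbT /w -expgM groupX ?cycle_id.
  by rewrite tiE => /set1P.
have K2 t : w ^+ t = 1 -> y ^+ t = 1.
  move=> wt; rewrite yt wt mul1g; apply/eqP; rewrite -order_dvdn.
  by apply: dvdn_trans (hord 0 erefl) _; rewrite order_dvdn wt.
have oy : #[y] = #[w].
  apply/eqP; rewrite eqn_dvd !order_dvdn; apply/andP; split.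
    by rewrite K2 ?expg_order.
  by rewrite K ?expg_order ?group1.
have yE : y \in E by rewrite y0 groupM.
have ti : <[y]> :&: H' = 1.
  apply/trivgP/subsetP => v /setIP[/cycleP[t ->] Hv].
  by rewrite K2 ?set11 // K // (subsetP sH'E').
have cyH : H' \subset 'C(<[y]>).
  by apply: (sub_abelian_cent2 cE); [apply: subset_trans sE'E | rewrite cycle_subG].
exists (<[y]> <*> H')%G.
  by rewrite big_cons defH' dprodEY.
split.
- by rewrite join_subG cycle_subG yE (subset_trans sH'E').
- by case=> [|i] //= lt; rewrite ordH'.
- move=> v; rewrite inE => /predU1P[->|vys].
    by rewrite mem_gen // inE cycle_id.
  by rewrite mem_gen // inE (memH' _ vys) orbT.
Qed.
Lemma rp_Mho (gT : finGroupType) p s (H : {group gT}) (b : seq gT) (t : seq nat) :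
  prime p -> \big[dprod/1]_(x <- b) <[x]> = H -> map order b = map (expn p) t ->
  'r_p('Mho^s(H)) = count (fun k => s < k) t.
Proof.
move=> pr; elim: b H t => [|x b IH] H [|k t] //=.
- by rewrite big_nil => <- _; rewrite Mho1 p_rank1.
- rewrite big_cons => defH [ox ob].
  case/dprodP: (defH) => [[_ H' _ defH']] _ _ _; rewrite defH' in defH.
  rewrite -(p_rank_dprod p (Mho_dprod s defH)) (IH _ _ defH' ob); congr (_ + _).
  have px : p.-elt x by rewrite /p_elt ox pnatX pnat_id.
  rewrite /= (Mho_p_cycle s px) -rank_pgroup ?rank_cycle; last exact: p_eltX.
  by rewrite -order_dvdn ox dvdn_Pexp2l ?prime_gt1 // ltnNge.
Qed.

Lemma pw_morphic (gT : finGroupType) (G : {group gT}) n :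
  abelian G -> morphic G (fun x => x ^+ n).
Proof.
move=> cG; apply/morphicP => x y Gx Gy; rewrite expgMn //.
exact: (centsP cG).
Qed.
Lemma geq_trans : transitive geq.
Proof. by move=> a b c h1 h2; apply: leq_trans h2 h1. Qed.

Lemma sorted_nth_geq (s : seq nat) i j : sorted geq s -> i <= j -> j < size s ->
  nth 0 s j <= nth 0 s i.
Proof.
move=> ss ij js.
have := sorted_leq_nth geq_trans (fun x => leqnn x) 0 ss; apply => //.
  by rewrite inE (leq_ltn_trans ij js).
Qed.

Lemma count_ge_sorted (s : seq nat) c : sorted geq s ->
  0 < count (fun x => c <= x) s -> c <= nth 0 s (count (fun x => c <= x) s).-1.
Proof.
elim: s => //= x s IH ss.
have ss' : sorted geq s by case: s ss {IH} => //= y s /andP[].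
case: (leqP c x) => cx /=.
  case E: (count _ s) => [|r] //= _; by have := IH ss'; rewrite E; apply.
have -> : count (fun x => c <= x) s = 0.
  apply/eqP; rewrite -leqn0 leqNgt -has_count; apply/hasPn => y ys.
  rewrite -ltnNge; apply: leq_ltn_trans cx.
  have : all (geq x) s by apply: order_path_min geq_trans ss.
  by move/allP => /(_ y ys).
by [].
Qed.

Lemma count_prefix (s : seq nat) J : sorted geq s -> 0 < J <= size s ->
  J <= count (fun x => nth 0 s J.-1 <= x) s.
Proof.
move=> ss /andP[J0 Js].
rewrite -[s in count _ s](cat_take_drop J) count_cat.
apply: leq_trans (leq_addr _ _).
have -> : count (fun x => nth 0 s J.-1 <= x) (take J s) = size (take J s).
  apply/eqP; rewrite -all_count; apply/(all_nthP 0) => i; rewrite (size_takel Js) => iJ.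
  rewrite nth_take // sorted_nth_geq //; first by lia.
  by lia.
by rewrite (size_takel Js).
Qed.

Lemma f_ge_count (alpha tau : seq nat) J : sorted geq alpha ->
  count (fun x => nth 0 tau J.-1 <= x) alpha <= ffun_ta alpha tau J.
Proof.
move=> sa; set r := count _ _.
have [->|r0] := posnP r; first by [].
have rm : r < (size alpha).+1 by rewrite ltnS count_size.
rewrite /ffun_ta; apply: (bigmax_sup (Ordinal rm)) => //=.
by rewrite count_ge_sorted // orbT.
Qed.

Lemma key_C (alpha tau : seq nat) j : sorted geq alpha ->
  u_ta alpha tau <= j < size tau ->
  j - u_ta alpha tau < size alpha /\ nth 0 tau j <= nth 0 alpha (j - u_ta alpha tau).
Proof.
move=> sa /andP[uj jn]; set u := u_ta alpha tau in uj *.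
have : j.+1 - ffun_ta alpha tau j.+1 <= u.
  by rewrite /u /u_ta; apply: (leq_bigmax_seq j.+1); rewrite // mem_index_iota ltnS; lia.
rewrite /ffun_ta (bigmax_eq_arg ord0) //=.
case: arg_maxnP => //= i /orP[/eqP->|Pi] _; first by lia.
move=> h; have im := ltn_ord i.
have lt1 : j - u < size alpha by lia.
split => //; apply: leq_trans Pi _; apply: sorted_nth_geq => //; lia.
Qed.

Lemma geq_anti : antisymmetric geq.
Proof. by move=> x y h; apply: anti_leq; rewrite andbC. Qed.

Lemma pgroup_type p (gT : finGroupType) (G : {group gT}) t :
  prime p -> has_type p G t -> p.-group G.
Proof.
move=> pr [cG tyG]; have [b defG ob] := abelian_structure cG; rewrite tyG in ob.
rewrite /pgroup -(bigdprod_card defG) big_seq.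
elim/big_ind: _ => //= [x y hx hy|x xb]; first by rewrite pnatM hx hy.
change (p.-nat #[x]); have := map_f order xb; rewrite ob => /mapP[k _ ->].
by rewrite pnatX pnat_id.
Qed.

Lemma lower_bound p (alpha tau : seq nat) (gT : finGroupType) (G N : {group gT}) :
  prime p -> is_type alpha -> is_type tau -> has_type p G tau ->
  N \subset G -> has_type p N alpha -> u_ta alpha tau <= 'r(G / N).
Proof.
move=> pr ta tt tyG0 sNG tyN0.
have pG := pgroup_type pr tyG0; have pN := pgroup_type pr tyN0.
case: tyG0 => cG tyG; case: tyN0 => cN tyN.
have [b defG ob] := abelian_structure cG; rewrite tyG in ob.
have [bN defN obN] := abelian_structure cN; rewrite tyN in obN.
case/andP: ta => sa pa; case/andP: tt => st pt.
rewrite /u_ta; apply/bigmax_leqP_seq => J; rewrite mem_index_iota => /andP[J1 Jn] _.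
set c := nth 0 tau J.-1.
have c0 : 0 < c by apply: (allP pt); rewrite mem_nth // -ltnS prednK.
set s := c.-1.
have hG := rp_Mho s pr defG ob; have hN := rp_Mho s pr defN obN.
have eqc : (fun k => s < k) =1 (fun k => c <= k).
  by move=> k; rewrite /s /= -[c in _ = (c <= k)](prednK c0).
rewrite (eq_count eqc) in hG hN.
have le1 : J - ffun_ta alpha tau J <= 'r_p('Mho^s(G)) - 'r_p('Mho^s(N)).
  rewrite hG hN; apply: leq_sub; first by apply: count_prefix => //; rewrite J1 -ltnS Jn.
  by have := (@f_ge_count alpha tau J sa); rewrite /s prednK.
have nM : 'Mho^s(G) \subset 'N('Mho^s(N)).
  apply: cents_norm; apply: (sub_abelian_cent2 cG); first exact: Mho_sub.
  exact: subset_trans (Mho_sub _ _) sNG.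
apply: (leq_trans le1); apply: (leq_trans (p_rank_quotient p nM)).
apply: (leq_trans (p_rank_le_rank p _)).
pose phi := morphm_morphism (pw_morphic (p ^ s) cG).
have nsNG : N <| G by rewrite -sub_abelian_normal.
have eG : phi @* G = 'Mho^s(G).
  by rewrite morphimEdom (MhoEabelian s pG cG).
have eN : phi @* N = 'Mho^s(N).
  by rewrite morphimE (setIidPr sNG) (MhoEabelian s pN cN).
have eNg : (phi @* N)%G = ('Mho^s(N))%G by apply: group_inj.
have := morphim_rank_abelian (quotm phi nsNG) (quotient_abelian N cG).
by rewrite morphim_quotm eG eN.
Qed.

Lemma u_le_n (alpha tau : seq nat) : u_ta alpha tau <= size tau.
Proof.
rewrite /u_ta; apply/bigmax_leqP_seq => J; rewrite mem_index_iota => /andP[_ Jn] _.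
by rewrite (leq_trans (leq_subr _ _)) // -ltnS.
Qed.

Theorem theorem3p2 (p : nat) (alpha tau : seq nat) (gT : finGroupType) (G : {group gT}) :
  prime p -> is_type alpha -> is_type tau -> type_le alpha tau ->
  has_type p G tau ->
  (exists N : {group gT}, [/\ N \subset G, has_type p N alpha & rk (G / N)%g = u_ta alpha tau])
  /\ (forall N : {group gT}, N \subset G -> has_type p N alpha -> u_ta alpha tau <= rk (G / N)%g).
Proof.
move=> pr ta tt tle tyG0.
have pG := pgroup_type pr tyG0.
have lowB (N : {group gT}) : N \subset G -> has_type p N alpha -> u_ta alpha tau <= rk (G / N)%g.
  move=> sNG tyN; case: (tyG0) => cG _.
  rewrite rk_grank grank_abelian ?quotient_abelian //.
  exact: (lower_bound pr ta tt tyG0 sNG tyN).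
split => //.
case: (tyG0) => cG tyG.
have [b defG ob] := abelian_structure cG; rewrite tyG in ob.
case/andP: (ta) => sa pa.
set u := u_ta alpha tau; set n := size tau; set m := size alpha.
have sb : size b = n by rewrite -(size_map order) ob size_map.
have ordb j : j < n -> #[nth 1 b j] = (p ^ nth 0 tau j)%N.
  move=> jn; have := congr1 (fun s => nth 0 s j) ob => /=.
  by rewrite (nth_map 1) ?sb // (nth_map 0).
case/andP: tle => mn /forallP leat.
have le i : i < m -> nth 0 alpha i <= nth 0 tau i.
  by move=> im; have := leat (Ordinal im).
pose a i := (p ^ (nth 0 tau i - nth 0 alpha i))%N.
pose z i := if (0 < u) && (u + i < n) then nth 1 b (u + i) else 1.
pose ys := mkseq (fun i => nth 1 b i ^+ a i * z i) m.
have ordX i : i < m -> #[nth 1 b i ^+ a i] = (p ^ nth 0 alpha i)%N.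
  move=> im; rewrite (orderXexp _ (ordb i _)); last by lia.
  by rewrite subKn // le.
have h1 : size ys <= size b by rewrite size_mkseq sb.
have h2 : forall i, i < size ys -> nth 1 ys i = nth 1 b i ^+ a i * z i.
  by move=> i; rewrite size_mkseq => im; rewrite nth_mkseq.
have h3 : forall i, i < size ys -> z i \in <<[set x in drop i.+1 b]>>.
  move=> i; rewrite size_mkseq => im; rewrite /z.
  case: ifP => [/andP[u0 uin]|_]; last by rewrite group1.
  apply: mem_gen; rewrite inE.
  have h : u + i - i.+1 < size (drop i.+1 b) by rewrite size_drop sb; lia.
  by have := mem_nth 1 h; rewrite nth_drop subnKC //; lia.
have h4 : forall i, i < size ys -> #[z i] %| #[nth 1 b i ^+ a i].
  move=> i; rewrite size_mkseq => im; rewrite ordX // /z.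
  case: ifP => [/andP[u0 uin]|_]; last by rewrite order1 dvd1n.
  rewrite ordb // dvdn_Pexp2l ?prime_gt1 //.
  have uin' : u <= u + i < n by rewrite leq_addr.
  by have [_] := key_C sa uin'; rewrite addKn.
have [N defN [sNG ordN memN]] := dir_lemma cG defG h1 h2 h3 h4.
have sys : size ys = m by rewrite size_mkseq.
have mo : map order ys = map (expn p) alpha.
  apply: (@eq_from_nth _ 0); first by rewrite !size_map size_iota.
  move=> i; rewrite size_map sys => im.
  rewrite (nth_map 1) ?sys // (nth_map 0) //.
  by rewrite ordN ?sys // ordX.
have ny1 : 1 \notin ys.
  apply/negP => y1; have := map_f order y1; rewrite mo order1 => /mapP[l lin].
  have l0 : 0 < l by apply: (allP pa).
  have := leq_pexp2l (prime_gt0 pr) l0; rewrite expn1 => h e.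
  by have := prime_gt1 pr; rewrite ltnNge (leq_trans h) // -e.
have cN : abelian N := abelianS sNG cG.
have tyN : has_type p N alpha.
  split => //; apply: (sorted_eq geq_trans geq_anti).
  - exact: abelian_type_sorted.
  - by move: sa; apply: homo_sorted => x y h; apply: leq_pexp2l (prime_gt0 pr) h.
  - by rewrite -mo; apply: abelian_type_pgroup (pgroupS sNG pG) defN ny1.
exists N; split => //.
apply/eqP; rewrite eqn_leq lowB // andbT.
rewrite rk_grank.
have nN : G \subset 'N(N) by apply: cents_norm; apply: sub_abelian_cent2 cG _ sNG.
have bG j : j < n -> nth 1 b j \in G.
  by move=> jn; apply: (mem_bigdprod_seq defG); rewrite mem_nth ?sb.
have un := u_le_n alpha tau.
pose X := [set coset N (nth 1 b (val j)) | j : 'I_u].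
have genX : <<X>> = (G / N)%g.
  apply/eqP; rewrite eqEsubset; apply/andP; split.
    rewrite gen_subG; apply/subsetP => _ /imsetP[j _ ->].
    by rewrite mem_quotient // bG // (leq_trans (ltn_ord j)).
  have claim j : j < n -> coset N (nth 1 b j) \in <<X>>.
    elim/ltn_ind: j => j IH jn.
    case: (ltnP j u) => [ju | uj].
      by apply: mem_gen; apply/imsetP; exists (Ordinal ju).
    have ujn : u <= j < n by rewrite uj.
    have [im lej] := key_C sa ujn.
    set i := j - u in im lej.
    have yN : nth 1 b i ^+ a i * z i \in N.
      have yi : nth 1 ys i \in N by apply: memN; rewrite mem_nth // sys.
      by move: yi; rewrite nth_mkseq.
    have bi : nth 1 b i \in 'N(N) by rewrite (subsetP nN) // bG // (leq_trans im mn).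
    have bj : nth 1 b j \in 'N(N) by rewrite (subsetP nN) // bG.
    case u0 : (0 < u).
      have zi : z i = nth 1 b j.
        by rewrite /z u0 /= /i subnKC // jn.
      rewrite zi in yN.
      have := coset_id yN; rewrite morphM ?groupX // morphX //.
      move=> e; rewrite -[coset N _](mulKg (coset N (nth 1 b i) ^+ a i)) e mulg1.
      have j0 : 0 < j by apply: leq_trans uj.
      by rewrite groupV groupX // IH ?(leq_trans im mn) // /i ltn_subrL u0 j0.
    have u00 : u = 0 by apply/eqP; rewrite eqn0Ngt u0.
    have ij : i = j by rewrite /i u00 subn0.
    have zi : z i = 1 by rewrite /z u0.
    have ai : a i = 1%N.
      rewrite /a ij; have -> : nth 0 tau j - nth 0 alpha j = 0 by apply/eqP; rewrite subn_eq0; move: lej; rewrite /i u00 subn0.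
      by rewrite expn0.
    rewrite zi ai expg1 mulg1 ij in yN.
    by rewrite coset_id // group1.
  rewrite -(gen_bigdprod_seq defG) quotient_gen; last first.
    by apply: subset_trans nN; rewrite -(gen_bigdprod_seq defG) subset_gen.
  rewrite gen_subG; apply/subsetP => _ /morphimP[x _ xb ->].
  rewrite inE in xb; rewrite -(nth_index 1 xb) claim //.
  by rewrite -sb index_mem.
have -> : 'm((G / N)%G) = 'm(<<X>>) by rewrite genX.
rewrite (leq_trans (grank_min _)) //.
by rewrite (leq_trans (leq_imset_card _ _)) // card_ord.
Qed.
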